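(* Let $\Omega\subseteq\mathbb{R}^n$ be open and let $f\in\mathbb{A}(\Omega)$. If $f$ is H-continuous then $f$ is D-continuous, and if $f$ is D-continuous then $f$ is S-continuous.
   Context: $\overline{\mathbb{R}}=\mathbb{R}\cup\{\pm\infty\}$ and $\mathbb{I}\overline{\mathbb{R}}=\{[\underline a,\overline a]:\underline a,\overline a\in\overline{\mathbb{R}},\ \underline a\le\overline a\}$, with $a\in\overline{\mathbb{R}}$ identified with $[a,a]$. $\mathbb{A}(\Omega)$ is the set of all functions $f:\Omega\to\mathbb{I}\overline{\mathbb{R}}$, written $f=[\underline f,\overline f]$. $B_\delta(x)=\{y\in\Omega:\|x-y\|<\delta\}$. For a dense subset $D\subseteq\Omega$ and $f\in\mathbb{A}(D)$ define $I(D,\Omega,f)(x)=\sup_{\delta>0}\inf\{z\in f(y):y\in B_\delta(x)\cap D\}$, $S(D,\Omega,f)(x)=\inf_{\delta>0}\sup\{z\in f(y):y\in B_\delta(x)\cap D\}$, and $F(D,\Omega,f)(x)=[I(D,\Omega,f)(x),S(D,\Omega,f)(x)]$ for $x\in\Omega$; when $D=\Omega$ write $I(f),S(f),F(f)$. A function $f\in\mathbb{A}(\Omega)$ is S-continuous if $F(f)=f$; D-continuous if $F(D,\Omega,f)=f$ for every dense subset $D$ of $\Omega$ (with $f$ restricted to $D$); H-continuous if for every $g\in\mathbb{A}(\Omega)$ with $g(x)\subseteq f(x)$ for all $x\in\Omega$ one has $F(g)(x)=f(x)$ for all $x\in\Omega$. *)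

(* Defs.v *)
From HB Require Import structures.
From mathcomp Require Import all_boot all_order all_algebra.
From mathcomp Require Import all_classical all_reals all_analysis.
Set Implicit Arguments. Unset Strict Implicit. Unset Printing Implicit Defensive.
Import Order.TTheory GRing.Theory Num.Theory.
Import numFieldNormedType.Exports.
Local Open Scope classical_set_scope.
Local Open Scope ring_scope.

Record eitv (R : realType) := EItv {
  ilo : \bar R;
  ihi : \bar R;
  ilo_le_ihi : (ilo <= ihi)%E }.

Definition in_eitv (R : realType) (a : eitv R) (z : \bar R) : Prop :=
  (ilo a <= z)%E /\ (z <= ihi a)%E.

Definition Ball (R : realType) (n : nat) (Omega : set 'rV[R]_n)
  (x : 'rV[R]_n) (delta : R) : set 'rV[R]_n :=
  [set y | Omega y /\ `|x - y| < delta].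

Definition vals (R : realType) (n : nat) (D Omega : set 'rV[R]_n)
  (f : 'rV[R]_n -> eitv R) (x : 'rV[R]_n) (delta : R) : set (\bar R) :=
  [set z | exists y, (Ball Omega x delta `&` D) y /\ in_eitv (f y) z].

Definition Ilow (R : realType) (n : nat) (D Omega : set 'rV[R]_n)
  (f : 'rV[R]_n -> eitv R) (x : 'rV[R]_n) : \bar R :=
  ereal_sup [set ereal_inf (vals D Omega f x delta) | delta in [set d : R | 0 < d]].

Definition Supp (R : realType) (n : nat) (D Omega : set 'rV[R]_n)
  (f : 'rV[R]_n -> eitv R) (x : 'rV[R]_n) : \bar R :=
  ereal_inf [set ereal_sup (vals D Omega f x delta) | delta in [set d : R | 0 < d]].

(* F(D,Omega,g) = f on Omega, i.e. [I(D,Omega,g)(x), S(D,Omega,g)(x)] = f(x) for x in Omega *)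
Definition F_eq (R : realType) (n : nat) (D Omega : set 'rV[R]_n)
  (g f : 'rV[R]_n -> eitv R) : Prop :=
  forall x, Omega x -> Ilow D Omega g x = ilo (f x) /\ Supp D Omega g x = ihi (f x).

Definition dense_in (R : realType) (n : nat) (D Omega : set 'rV[R]_n) : Prop :=
  D `<=` Omega /\ Omega `<=` closure D.

Definition S_continuous (R : realType) (n : nat) (Omega : set 'rV[R]_n)
  (f : 'rV[R]_n -> eitv R) : Prop := F_eq Omega Omega f f.

Definition D_continuous (R : realType) (n : nat) (Omega : set 'rV[R]_n)
  (f : 'rV[R]_n -> eitv R) : Prop :=
  forall D : set 'rV[R]_n, dense_in D Omega -> F_eq D Omega f f.

Definition H_continuous (R : realType) (n : nat) (Omega : set 'rV[R]_n)
  (f : 'rV[R]_n -> eitv R) : Prop :=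
  forall g : 'rV[R]_n -> eitv R,
    (forall x, Omega x -> forall z, in_eitv (g x) z -> in_eitv (f x) z) ->
    F_eq Omega Omega g f.

(* Main.v *)
Require Import Defs.
From mathcomp Require Import all_boot all_order all_algebra.
From mathcomp Require Import all_classical all_reals all_analysis.
From mathcomp Require Import lra.
Import numFieldNormedType.Exports.
Import Order.TTheory GRing.Theory Num.Theory.
Local Open Scope classical_set_scope.
Local Open Scope ring_scope.

Lemma dense_pt (R : realType) (n : nat) (D : set 'rV[R]_n) (y : 'rV[R]_n) (e : R) :
  closure D y -> 0 < e -> exists d, D d /\ `|y - d| < e.
Proof.
move=> cl e0; have := cl _ (nbhsx_ballx y _ e0).
case=> d [Dd bd]; exists d; split => //.
by move: bd; rewrite -ball_normE.
Qed.

Lemma Ilow_mono (R : realType) (n : nat) (D D' Omega : set 'rV[R]_n) f x :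
  D `<=` D' -> (Ilow D' Omega f x <= Ilow D Omega f x)%E.
Proof.
move=> DD; apply: ge_ereal_sup => _ [d d0 <-].
apply: le_trans (ereal_sup_ubound _); last by exists d.
apply: le_ereal_inf => z [y [[By Dy] iz]]; exists y; split => //; split => //.
exact: DD.
Qed.

Lemma Supp_mono (R : realType) (n : nat) (D D' Omega : set 'rV[R]_n) f x :
  D `<=` D' -> (Supp D Omega f x <= Supp D' Omega f x)%E.
Proof.
move=> DD; apply: le_ereal_inf_tmp => _ [d d0 <-].
apply: (@le_trans _ _ (ereal_sup (vals D Omega f x d))).
  by apply: ereal_inf_lbound; exists d.
apply: le_ereal_sup => z [y [[By Dy] iz]]; exists y; split => //; split => //.
exact: DD.
Qed.

Theorem theorem1 (R : realType) (n : nat) (Omega : set 'rV[R]_n)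
  (f : 'rV[R]_n -> eitv R) :
  open Omega ->
  (H_continuous Omega f -> D_continuous Omega f) /\
  (D_continuous Omega f -> S_continuous Omega f).
Proof.
move=> _; split; last first.
  move=> HD; apply: HD; split => //; exact: subset_closure.
move=> HH D [DO OD] x Ox.
have Sc : S_continuous Omega f by apply: HH.
split; apply/eqP; rewrite eq_le; apply/andP; split.
-
  pose g y := if pselect (D y) then f y else EItv (lexx (ihi (f y))).
  have gf : forall x, Omega x -> forall z, in_eitv (g x) z -> in_eitv (f x) z.
    move=> y _ z; rewrite /g; case: pselect => // _ [/= h1 h2].
    split; last by [].
    by apply: le_trans (ilo_le_ihi _) h1.
  have [<- _] := HH g gf x Ox.
  apply: ge_ereal_sup => _ [d d0 <-].
  apply: le_trans (ereal_sup_ubound _); last by exists d.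
  apply: le_ereal_inf_tmp => z [y [[[Oy xy] _] iz]].
  move: iz; rewrite /g; case: pselect => Dy.
    move=> iz; apply: ereal_inf_lbound; exists y; split => //.
  move=> [/= h1 h2]; have -> : z = ihi (f y) by apply/eqP; rewrite eq_le h1 h2.
  have [_ <-] := Sc y Oy.
  apply: le_ereal_inf_tmp => _ [e e0 <-].
  have pos : 0 < Order.min e (d - `|x - y|).
    by rewrite lt_min e0 subr_gt0.
  have [w [Dw yw]] := @dense_pt _ _ _ _ _ (OD y Oy) pos.
  move: yw; rewrite lt_min => /andP[yw1 yw2].
  apply: (@le_trans _ _ (ilo (f w))).
    apply: ereal_inf_lbound; exists w; split; last by split => //; exact: ilo_le_ihi.
    split => //; split; first exact: DO.
    have := ler_distD y x w; lra.
  apply: ereal_sup_ubound; exists w; split; last by split => //; exact: ilo_le_ihi.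
  by split; [split; [exact: DO | exact: yw1] | exact: DO].
- have [<- _] := Sc x Ox; exact: Ilow_mono.
- have [_ <-] := Sc x Ox; exact: Supp_mono.
- pose g y := if pselect (D y) then f y else EItv (lexx (ilo (f y))).
  have gf : forall x, Omega x -> forall z, in_eitv (g x) z -> in_eitv (f x) z.
    move=> y _ z; rewrite /g; case: pselect => // _ [/= h1 h2].
    split; first by [].
    by apply: le_trans h2 (ilo_le_ihi _).
  have [_ <-] := HH g gf x Ox.
  apply: le_ereal_inf_tmp => _ [d d0 <-].
  apply: (@le_trans _ _ (ereal_sup (vals Omega Omega g x d))).
    by apply: ereal_inf_lbound; exists d.
  apply: ge_ereal_sup => z [y [[[Oy xy] _] iz]].
  move: iz; rewrite /g; case: pselect => Dy.
    move=> iz; apply: ereal_sup_ubound; exists y; split => //.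
  move=> [/= h1 h2]; have -> : z = ilo (f y) by apply/eqP; rewrite eq_le h2 h1.
  have [<- _] := Sc y Oy.
  apply: ge_ereal_sup => _ [e e0 <-].
  have pos : 0 < Order.min e (d - `|x - y|).
    by rewrite lt_min e0 subr_gt0.
  have [w [Dw yw]] := @dense_pt _ _ _ _ _ (OD y Oy) pos.
  move: yw; rewrite lt_min => /andP[yw1 yw2].
  apply: (@le_trans _ _ (ihi (f w))).
    apply: ereal_inf_lbound; exists w; split; last by split => //; exact: ilo_le_ihi.
    by split; [split; [exact: DO | exact: yw1] | exact: DO].
  apply: ereal_sup_ubound; exists w; split; last by split => //; exact: ilo_le_ihi.
  split => //; split; first exact: DO.
  have := ler_distD y x w; lra.
Qed.
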